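(* Let $p\ne5$ be an odd prime. Then $$(-1)^{[p/4]}\sum_{k=0}^{[p/4]}\binom{4k}{2k}\frac1{80^k}\equiv\begin{cases}\pm1\pmod p&\text{if }p\equiv\pm1\pmod5,\\ \pm\frac12\pmod p&\text{if }p\equiv\pm2\pmod5.\end{cases}$$
   Context: $[x]$ is the greatest integer $\le x$. *)

(* Defs.v *)
From HB Require Import structures.
From mathcomp Require Import all_boot all_order all_algebra.
Set Implicit Arguments. Unset Strict Implicit. Unset Printing Implicit Defensive.
Import GRing.Theory.
Local Open Scope ring_scope.

Definition S80 (p : nat) : 'F_p :=
  (-1) ^+ (p %/ 4) * \sum_(0 <= k < (p %/ 4).+1) ('C(4 * k, 2 * k))%:R / (80%:R) ^+ k.

(* Main.v *)
Require Import Defs.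
From HB Require Import structures.
From mathcomp Require Import all_boot all_order all_algebra.
From mathcomp Require Import ring zify.
Import GRing.Theory.
Local Open Scope ring_scope.

Lemma sum_pair (R : nmodType) (F : nat -> R) (m : nat) :
  \sum_(0 <= i < (2 * m)%N) F i = \sum_(0 <= k < m) (F (2 * k)%N + F (2 * k).+1).
Proof.
elim: m => [|m IH]; first by rewrite !big_geq.
have -> : (2 * m.+1 = (2 * m).+2)%N by lia.
rewrite [RHS]big_nat_recr //= -IH.
by rewrite big_nat_recr //= big_nat_recr //= addrA.
Qed.

Lemma binom_even (R : comNzRingType) (a b t : R) (h : nat) :
  b ^+ 2 = a -> a * t = 1 ->
  (a + b) ^+ h + (a - b) ^+ h =
  2%:R * a ^+ h * \sum_(0 <= k < (h %/ 2).+1) 'C(h, 2 * k)%:R * t ^+ k.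
Proof.
move=> hb ht.
rewrite !exprDn -big_split /=.
set G := fun i : nat => a ^+ (h - i) * (b ^+ i + (- b) ^+ i) *+ 'C(h, i).
have -> : \sum_(i < h.+1) (a ^+ (h - i) * b ^+ i *+ 'C(h, i) +
           a ^+ (h - i) * (- b) ^+ i *+ 'C(h, i)) = \sum_(0 <= i < h.+1) G i.
  by rewrite big_mkord; apply: eq_bigr => i _; rewrite /G mulrDr mulrnDl.
have -> : \sum_(0 <= i < h.+1) G i = \sum_(0 <= i < (2 * (h %/ 2).+1)%N) G i.
  rewrite [RHS](big_cat_nat _ (n := h.+1)) //=; last by lia.
  rewrite [X in _ = _ + X]big1_seq ?addr0 // => i /andP [_].
  rewrite mem_index_iota => /andP [hi _].
  by rewrite /G bin_small ?mulr0n.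
rewrite sum_pair big_distrr /=; apply: eq_big_nat => k _.
have Godd : G (2 * k).+1 = 0.
  by rewrite /G exprNn -signr_odd /= oddM /= expr1 mulN1r subrr mulr0 mul0rn.
rewrite Godd addr0 /G exprNn -signr_odd oddM /= expr0 mul1r.
have [hk|hk] := leqP (2 * k) h; last by rewrite bin_small // !mul0r mulr0.
have -> : a ^+ h = a ^+ (h - 2 * k) * a ^+ k * a ^+ k.
  by rewrite -mulrA -exprD -exprD; congr (_ ^+ _); lia.
rewrite exprM hb -mulr2n mulrnAr -mulr_natr.
have e : a ^+ k * t ^+ k = 1 by rewrite -exprMn ht expr1n.
rewrite -mulr_natl.
transitivity (2%:R * (a ^+ (h - 2 * k) * a ^+ k) * 'C(h, 2 * k)%:R * (a ^+ k * t ^+ k)).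
  by rewrite e mulr1 mulrA.
ring.
Qed.

Lemma central (R : comNzRingType) (h m : nat) :
  (2 * h + 1)%:R = 0 :> R -> (m <= h)%N ->
  ((2 * m)`!)%:R = (-4) ^+ m * ('C(h, m) * m`! * m`!)%:R :> R.
Proof.
move=> hp; elim: m => [|m IH] hm; first by rewrite bin0 !fact0 expr0 mul1r.
have hm' : (m <= h)%N by lia.
have e1 : ('C(h, m.+1) * m.+1`! * m.+1`! = ((h - m) * m.+1) * ('C(h, m) * m`! * m`!))%N.
  rewrite !factS.
  transitivity ((m.+1 * 'C(h, m.+1)) * m`! * (m.+1 * m`!))%N; first ring.
  rewrite mul_bin_left; ring.
have e2 : (2 * m.+1)`! = ((2 * m).+2 * (2 * m).+1 * (2 * m)`!)%N.
  have -> : (2 * m.+1 = (2 * m).+2)%N by lia.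
  by rewrite !factS mulnA.
rewrite e1 e2 natrM [in RHS]natrM IH // exprS.
have e3 : ((2 * m).+2 * (2 * m).+1)%:R = - 4%:R * ((h - m) * m.+1)%:R :> R.
  have a1 : ((2 * m).+2 * (2 * m).+1)%:R = (2%:R * m%:R + 2%:R) * (2%:R * m%:R + 1) :> R.
    have -> : ((2 * m).+2 * (2 * m).+1 = (2 * m + 2) * (2 * m + 1))%N by rewrite addn2 addn1.
    rewrite (natrM R (2 * m + 2)%N) !(natrD R); ring.
  have a2 : ((h - m) * m.+1)%:R = (h%:R - m%:R) * (m%:R + 1) :> R.
    by rewrite natrM natrB // -[m.+1]addn1 natrD.
  rewrite a1 a2; apply/eqP; rewrite -subr_eq0; apply/eqP.
  rewrite natrD natrM in hp.
  transitivity (2%:R * (m%:R + 1) * (2%:R * h%:R + 1) : R); first ring.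
  by rewrite hp mulr0.
rewrite e3; ring.
Qed.

Set Implicit Arguments. Unset Strict Implicit.

Lemma viaphi (K : comNzRingType) (P E F Q : K) : P = 0 -> E - F = Q * P -> E = F.
Proof. by move=> hP h; apply/eqP; rewrite -subr_eq0 h hP mulr0. Qed.

Lemma canc (K : comNzRingType) (u v a b : K) : v * u = 1 -> u * a = u * b -> a = b.
Proof. by move=> hv h; rewrite -[a]mul1r -hv -mulrA h mulrA hv mul1r. Qed.

Lemma inv2_lem (K : comNzRingType) (p : nat) : p \in [pchar K] -> odd p ->
  2%:R * ((p %/ 2).+1)%:R = 1 :> K.
Proof.
move=> hc hodd.
have e : (2 * (p %/ 2).+1 = p + 1)%N.
  have := divn_eq p 2; rewrite modn2 hodd /=; lia.
by rewrite -(natrM K) e (natrD K) (pcharf0 hc) add0r.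
Qed.

Lemma p_eq (p : nat) : odd p -> p = (2 * (p %/ 2)).+1.
Proof. move=> hodd; have := divn_eq p 2; rewrite modn2 hodd /=; lia. Qed.

Lemma qlemma (K : comNzRingType) (p : nat) (hc : p \in [pchar K]) (hodd : odd p)
  (i : K) (hi : i ^+ 2 = -1) : (- 2%:R) ^+ (p %/ 2) = (-1) ^+ (p %/ 4) :> K.
Proof.
set h := (p %/ 2)%N; set n := (p %/ 4)%N.
have hi2 : i ^+ 2 + 1 = 0 by rewrite hi addNr.
have e1 : - 2%:R = (1 + i) ^+ 2 * i.
  by apply: (viaphi (Q := - (i + 2%:R)) hi2); ring.
have i4 : i ^+ 4 = 1 by rewrite (_ : 4 = 2 * 2)%N // exprM hi sqrrN expr1n.
have hp := p_eq hodd.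
have frE : forall a : K, a ^+ p = pFrobenius_aut hc a by [].
have e2 : (1 + i) * (- 2%:R) ^+ h = (1 + i ^+ p) * i ^+ h.
  by rewrite e1 exprMn -exprM mulrA -exprS -hp frE rmorphD rmorph1.
have c1 : forall a b : K, (1 + i) * a = (1 + i) * b -> a = b.
  move=> a b; apply: (canc (v := (1 - i) * ((p %/ 2).+1)%:R)).
  transitivity ((1 - i ^+ 2) * ((p %/ 2).+1)%:R); first ring.
  rewrite hi; transitivity (2%:R * ((p %/ 2).+1)%:R : K); first ring.
  exact: inv2_lem.
have [h4|h4] : (p %% 4 = 1 \/ p %% 4 = 3)%N.
  have := divn_eq p 4; have := ltn_pmod p (isT : 0 < 4)%N; move: hodd.
  rewrite {1}(divn_eq p 4) oddD oddM /=; lia.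
- have hh : h = (2 * n)%N by rewrite /h /n; lia.
  apply: c1; rewrite e2 -(expr_mod p i4) h4 hh exprM hi; ring.
- have hh : h = (2 * n).+1 by rewrite /h /n; lia.
  have i3 : i ^+ 3 = - i by rewrite exprS hi mulrN1.
  apply: c1; rewrite e2 -(expr_mod p i4) h4 i3 hh exprS exprM hi.
  transitivity ((-1) ^+ n * (i - i ^+ 2)); first ring.
  rewrite hi; ring.
Qed.

Lemma zlemma (K : comNzRingType) (p : nat) (hc : p \in [pchar K]) (hodd : odd p)
  (z t : K) (hz : 1 + z + z ^+ 2 + z ^+ 3 + z ^+ 4 = 0) (ht : 5%:R * t = 1) :
  let h := (p %/ 2)%N in
  let T := \sum_(0 <= k < (h %/ 2).+1) 'C(h, 2 * k)%:R * t ^+ k in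
  let q := (- 2%:R) ^+ h in
  [/\ (p %% 5 = 1)%N -> T = q, (p %% 5 = 4)%N -> T = - q,
      (p %% 5 = 2)%N -> 2%:R * T = q & (p %% 5 = 3)%N -> 2%:R * T = - q].
Proof.
move=> h T q.
pose x := z - z ^+ 4. pose y := z ^+ 2 - z ^+ 3. pose w := z + z ^+ 4 - z ^+ 2 - z ^+ 3.
have I1 : w * w = 5%:R.
  by apply: (viaphi (Q := ((-(5%:R)) * 1 + (5%:R) * z + (1%:R) * z^+2 + (-(3%:R)) * z^+3 + (1%:R) * z^+4)) hz); unfold x, y, w; ring.
have I2 : 5%:R + w = - 2%:R * x ^+ 2.
  by apply: (viaphi (Q := ((5%:R) * 1 + (-(4%:R)) * z + (-(2%:R)) * z^+3 + (2%:R) * z^+4)) hz); unfold x, y, w; ring.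
have I3 : 5%:R - w = - 2%:R * y ^+ 2.
  by apply: (viaphi (Q := ((5%:R) * 1 + (-(6%:R)) * z + (2%:R) * z^+2)) hz); unfold x, y, w; ring.
have I4 : x * y = - w.
  by apply: (viaphi (Q := ((1%:R) * z + (-(2%:R)) * z^+2 + (1%:R) * z^+3)) hz); unfold x, y, w; ring.
have I5 : y ^+ 2 - x ^+ 2 = w.
  by apply: (viaphi (Q := ((-(1%:R)) * z + (1%:R) * z^+2 + (1%:R) * z^+3 + (-(1%:R)) * z^+4)) hz); unfold x, y, w; ring.
have x4 : z ^+ 4 - (z ^+ 4) ^+ 4 = - x.
  by apply: (viaphi (Q := ((1%:R) * z + (-(1%:R)) * z^+2 + (1%:R) * z^+6 + (-(1%:R)) * z^+7 + (1%:R) * z^+11 + (-(1%:R)) * z^+12)) hz); unfold x, y, w; ring.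
have y4 : (z ^+ 4) ^+ 2 - (z ^+ 4) ^+ 3 = - y.
  by apply: (viaphi (Q := ((1%:R) * z^+2 + (-(2%:R)) * z^+3 + (1%:R) * z^+4 + (1%:R) * z^+7 + (-(1%:R)) * z^+8)) hz); unfold x, y, w; ring.
have w4 : z ^+ 4 + (z ^+ 4) ^+ 4 - (z ^+ 4) ^+ 2 - (z ^+ 4) ^+ 3 = w.
  by apply: (viaphi (Q := ((-(1%:R)) * z + (2%:R) * z^+2 + (-(1%:R)) * z^+4 + (-(1%:R)) * z^+6 + (2%:R) * z^+7 + (-(1%:R)) * z^+8 + (-(1%:R)) * z^+11 + (1%:R) * z^+12)) hz); unfold x, y, w; ring.
have x2 : z ^+ 2 - (z ^+ 2) ^+ 4 = y.
  by apply: (viaphi (Q := ((1%:R) * z^+3 + (-(1%:R)) * z^+4)) hz); unfold x, y, w; ring.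
have y2 : (z ^+ 2) ^+ 2 - (z ^+ 2) ^+ 3 = - x.
  by apply: (viaphi (Q := ((1%:R) * z + (-(1%:R)) * z^+2)) hz); unfold x, y, w; ring.
have w2 : z ^+ 2 + (z ^+ 2) ^+ 4 - (z ^+ 2) ^+ 2 - (z ^+ 2) ^+ 3 = - w.
  by apply: (viaphi (Q := ((1%:R) * z + (-(1%:R)) * z^+2 + (-(1%:R)) * z^+3 + (1%:R) * z^+4)) hz); unfold x, y, w; ring.
have x3 : z ^+ 3 - (z ^+ 3) ^+ 4 = - y.
  by apply: (viaphi (Q := ((1%:R) * z^+2 + (-(1%:R)) * z^+3 + (1%:R) * z^+7 + (-(1%:R)) * z^+8)) hz); unfold x, y, w; ring.
have y3 : (z ^+ 3) ^+ 2 - (z ^+ 3) ^+ 3 = x.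
  by apply: (viaphi (Q := ((-(1%:R)) * z + (1%:R) * z^+2 + (1%:R) * z^+4 + (-(1%:R)) * z^+5)) hz); unfold x, y, w; ring.
have w3 : z ^+ 3 + (z ^+ 3) ^+ 4 - (z ^+ 3) ^+ 2 - (z ^+ 3) ^+ 3 = - w.
  by apply: (viaphi (Q := ((1%:R) * z + (-(2%:R)) * z^+2 + (1%:R) * z^+3 + (1%:R) * z^+4 + (-(1%:R)) * z^+5 + (-(1%:R)) * z^+7 + (1%:R) * z^+8)) hz); unfold x, y, w; ring.
have z5 : z ^+ 5 = 1 by apply: (viaphi (Q := z - 1) hz); ring.
have hp := p_eq hodd.
have Fz : forall a : K, a ^+ p = pFrobenius_aut hc a by [].
have zp : z ^+ p = z ^+ (p %% 5) by rewrite (expr_mod p z5).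
have Xp : x ^+ p = z ^+ p - (z ^+ p) ^+ 4.
  by rewrite !Fz /x rmorphB rmorphXn.
have Yp : y ^+ p = (z ^+ p) ^+ 2 - (z ^+ p) ^+ 3.
  by rewrite !Fz /y rmorphB !rmorphXn.
have Wp : w ^+ p = z ^+ p + (z ^+ p) ^+ 4 - (z ^+ p) ^+ 2 - (z ^+ p) ^+ 3.
  by rewrite !Fz /w !rmorphB rmorphD !rmorphXn.
have inv2 := inv2_lem hc hodd.
have c2 : forall a b : K, 2%:R * a = 2%:R * b -> a = b.
  move=> a b; apply: (canc (v := ((p %/ 2).+1)%:R)); rewrite mulrC; exact: inv2.
have cw : forall a b : K, w * a = w * b -> a = b.
  move=> a b; apply: (canc (v := w * t)); by rewrite -mulrA mulrC -mulrA I1 mulrC ht.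
have hw2 : w ^+ 2 = 5%:R by rewrite expr2 I1.
have binom := binom_even _ _ _ _ h hw2 ht.
set F := (5%:R : K) ^+ h.
have WF : w ^+ p = w * F.
  by rewrite /F -hw2 -exprM hp exprS.
have Key : 2%:R * F * T * (x * y) = q * (y * x ^+ p + x * y ^+ p).
  rewrite -binom I2 I3 !exprMn.
  have -> : x ^+ p = x * (x ^+ h * x ^+ h) by rewrite {1}hp exprS mul2n -addnn exprD.
  have -> : y ^+ p = y * (y ^+ h * y ^+ h) by rewrite {1}hp exprS mul2n -addnn exprD.
  rewrite /q; ring.
split=> hr; rewrite zp hr in Xp Yp Wp.
- rewrite expr1 -/x in Xp; rewrite expr1 -/y in Yp; rewrite expr1 -/w in Wp.
  have F1 : F = 1 by apply: cw; rewrite -WF Wp mulr1.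
  rewrite Xp Yp F1 [y * x]mulrC I4 in Key.
  apply: cw; apply: c2.
  transitivity (-(2%:R * 1 * T * - w)); first ring.
  rewrite Key; ring.
- rewrite x4 in Xp; rewrite y4 in Yp; rewrite w4 in Wp.
  have F1 : F = 1 by apply: cw; rewrite -WF Wp mulr1.
  rewrite Xp Yp F1 in Key.
  apply: cw; apply: c2.
  transitivity (-(2%:R * 1 * T * (x * y))); first by rewrite I4; ring.
  rewrite Key; transitivity (2%:R * q * (x * y)); first ring.
  rewrite I4; ring.
- rewrite x2 in Xp; rewrite y2 in Yp; rewrite w2 in Wp.
  have F1 : F = -1 by apply: cw; rewrite -WF Wp mulrN1.
  rewrite Xp Yp F1 in Key.
  apply: cw.
  transitivity (2%:R * -1 * T * (x * y)); first by rewrite I4; ring.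
  rewrite Key; transitivity (q * (y ^+ 2 - x ^+ 2)); first ring.
  rewrite I5; ring.
- rewrite x3 in Xp; rewrite y3 in Yp; rewrite w3 in Wp.
  have F1 : F = -1 by apply: cw; rewrite -WF Wp mulrN1.
  rewrite Xp Yp F1 in Key.
  apply: cw.
  transitivity (2%:R * -1 * T * (x * y)); first by rewrite I4; ring.
  rewrite Key; transitivity (- (q * (y ^+ 2 - x ^+ 2))); first ring.
  rewrite I5; ring.
Qed.

Lemma ndvd_fact (p m : nat) : prime p -> (m < p)%N -> ~~ (p %| m`!)%N.
Proof.
move=> hp; elim: m => [|m IH] hm; first by rewrite fact0 Euclid_dvd1.
rewrite factS Euclid_dvdM // negb_or IH ?andbT; last by lia.
by apply/negP => /(dvdn_leq (isT : 0 < m.+1)%N); lia.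
Qed.

Lemma Fp_nz (p m : nat) : prime p -> ~~ (p %| m)%N -> (m%:R : 'F_p) != 0.
Proof. by move=> hp; rewrite (dvdn_pcharf (pchar_Fp hp)). Qed.

Lemma S80_eq (p : nat) (hp : prime p) (hodd : odd p) (h5 : p <> 5%N) :
  S80 p = (-1) ^+ (p %/ 4) *
    \sum_(0 <= k < (p %/ 4).+1) 'C(p %/ 2, 2 * k)%:R * ((5%:R : 'F_p)^-1) ^+ k.
Proof.
have hc := pchar_Fp hp.
have hpe := p_eq hodd.
have n2 : ~~ (p %| 2)%N by rewrite dvdn_prime2 //; apply/eqP => e; rewrite e in hodd.
have n5 : ~~ (p %| 5)%N by rewrite dvdn_prime2 //; apply/eqP.
have n16 : (16%:R : 'F_p) != 0.
  by apply: Fp_nz => //; rewrite (_ : 16 = 2 ^ 4)%N // Euclid_dvdX // negb_and n2.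
have n5' : (5%:R : 'F_p) != 0 by apply: Fp_nz.
rewrite /S80; congr (_ * _); apply: eq_big_nat => k /andP [_ hk].
have h2k : (2 * k <= p %/ 2)%N by lia.
have hh : ((2 * (p %/ 2) + 1)%:R : 'F_p) = 0.
  by rewrite addn1 -hpe (pcharf0 hc).
have e := central _ _ _ hh h2k.
have e2 := bin_fact (leq_addr (2 * k) (2 * k)).
rewrite addnK addnn -mul2n in e2.
have fnz : ((2 * k)`! * (2 * k)`!)%:R != (0 : 'F_p).
  rewrite (natrM 'F_p) mulf_neq0 // Fp_nz // ndvd_fact //; lia.
have e3 : ('C(2 * (2 * k), 2 * k)%:R : 'F_p) = 16%:R ^+ k * 'C(p %/ 2, 2 * k)%:R.
  apply: (mulIf fnz); rewrite -(natrM 'F_p) e2 e -mulnA (natrM 'F_p _ ((2 * k)`! * _)%N) mulrA.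
  congr (_ * _ * _).
  by rewrite exprM sqrrN -(natrX 'F_p).
rewrite (_ : (4 * k = 2 * (2 * k))%N); last by lia.
rewrite e3 (_ : 80 = 16 * 5)%N // (natrM 'F_p) exprMn invfM exprVn.
rewrite [16%:R ^+ k * _]mulrC -!mulrA; congr (_ * _).
by rewrite mulrA mulfV ?mul1r // expf_neq0.
Qed.

Definition P20 (p : nat) : {poly 'F_p} := 'X^8 + (- 'X^6 + 'X^4 - 'X^2 + 1).

Lemma P20_monic p : P20 p \is monic /\ size (P20 p) = 9%N.
Proof.
pose r : {poly 'F_p} := - 'X^6 + 'X^4 - 'X^2 + 1.
pose s : {poly 'F_p} := 'X^8.
have hs : (size r < size s)%N.
  rewrite /r /s.
  rewrite size_polyXn ltnS.
  repeat (apply: (leq_trans (size_polyD _ _)); rewrite geq_max; apply/andP; split);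
    rewrite ?size_polyN ?size_polyXn ?size_poly1 //.
split; first by rewrite monicE /P20 lead_coefDl // lead_coefXn.
by rewrite /P20 size_polyDl // size_polyXn.
Qed.

Lemma P20_zero p : in_qpoly (P20 p) (P20 p) = 0.
Proof.
have [hm hs] := P20_monic p.
have mk : mk_monic (P20 p) = P20 p by rewrite /mk_monic hs hm.
apply: val_inj => /=; rewrite mk.
exact: Pdiv.RingMonic.rmodpp.
Qed.

Unset Implicit Arguments. Set Strict Implicit.
Theorem corollary2p6 (p : nat) (hp : prime p) (hodd : odd p) (h5 : p <> 5%N) :
  [/\ (p %% 5 = 1)%N -> S80 p = 1,
      (p %% 5 = 4)%N -> S80 p = -1,
      (p %% 5 = 2)%N -> S80 p = 2%:R^-1
    & (p %% 5 = 3)%N -> S80 p = - 2%:R^-1].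
Proof.
pose iota := qpolyC (P20 p).
have inj : forall a b : 'F_p, iota a = iota b -> a = b.
  move=> a b e; have := congr1 (fun u : {poly %/ P20 p} => (u : {poly 'F_p})) e.
  by move=> /= /polyC_inj.
have hcF := pchar_Fp hp.
have hc : p \in [pchar {poly %/ P20 p}] by rewrite (pchar_qpoly (P20 p) p).
pose xi : {poly %/ P20 p} := in_qpoly (P20 p) 'X.
have hxi : xi ^+ 8 + (- xi ^+ 6 + xi ^+ 4 - xi ^+ 2 + 1) = 0.
  have := P20_zero p; rewrite {1}/P20 !rmorphD !rmorphN rmorph1 !rmorphXn.
  by [].
have hz : 1 + xi ^+ 4 + (xi ^+ 4) ^+ 2 + (xi ^+ 4) ^+ 3 + (xi ^+ 4) ^+ 4 = 0.
  by apply: (viaphi (Q := xi ^+ 8 + xi ^+ 6 + xi ^+ 4 + xi ^+ 2 + 1) hxi); ring.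
have hi : (xi ^+ 5) ^+ 2 = -1.
  by apply: (viaphi (Q := xi ^+ 2 + 1) hxi); ring.
have n2 : ~~ (p %| 2)%N by rewrite dvdn_prime2 //; apply/eqP => e; rewrite e in hodd.
have n5 : ~~ (p %| 5)%N by rewrite dvdn_prime2 //; apply/eqP.
have n2' : (2%:R : 'F_p) != 0 by apply: Fp_nz.
have n5' : (5%:R : 'F_p) != 0 by apply: Fp_nz.
pose t := iota (5%:R^-1).
have ht : 5%:R * t = 1.
  by rewrite /t -(rmorph_nat iota) -rmorphM mulfV // rmorph1.
have [Z1 Z4 Z2 Z3] := zlemma hc hodd hz ht.
have Q := qlemma hc hodd hi.
have e4 : (p %/ 4 = p %/ 2 %/ 2)%N by rewrite -divnMA.
have Sm : iota (S80 p) = (-1) ^+ (p %/ 4) *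
   \sum_(0 <= k < (p %/ 2 %/ 2).+1) 'C(p %/ 2, 2 * k)%:R * t ^+ k.
  rewrite (S80_eq hp hodd h5) /iota rmorphM rmorphXn rmorphN1 rmorph_sum -e4.
  by congr (_ * _); apply: eq_bigr => k _; rewrite rmorphM rmorph_nat rmorphXn.
have sq : (-1) ^+ (p %/ 4) * (-1) ^+ (p %/ 4) = 1 :> {poly %/ P20 p}.
  by rewrite -exprMn mulrNN mulr1 expr1n.
split=> hr.
- apply: (inj (S80 p)); rewrite Sm (Z1 hr) Q sq; exact: esym (rmorph1 _).
- by apply: (inj (S80 p)); rewrite Sm (Z4 hr) Q mulrN sq /iota rmorphN rmorph1.
- have e : S80 p * 2%:R = 1.
    apply: (inj (S80 p * 2%:R)); have -> : iota (S80 p * 2%:R) = iota (S80 p) * 2%:R by rewrite /iota rmorphM rmorph_nat.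
    rewrite Sm.
    by rewrite -mulrA [_ * 2%:R]mulrC (Z2 hr) Q sq /iota rmorph1.
  by apply: (mulIf n2'); rewrite e mulVf.
- have e : S80 p * 2%:R = -1.
    apply: (inj (S80 p * 2%:R)); have -> : iota (S80 p * 2%:R) = iota (S80 p) * 2%:R by rewrite /iota rmorphM rmorph_nat.
    rewrite Sm.
    by rewrite -mulrA [_ * 2%:R]mulrC (Z3 hr) Q mulrN sq /iota rmorphN rmorph1.
  by apply: (mulIf n2'); rewrite e mulNr mulVf.
Qed.
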